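(* Under the hypotheses and with the notation of the context, the function $\nu\colon K\times K\to\widehat H$, $\nu(y_1,y_2)(h)=\tilde\nu(y_1,y_2)(h)(1)$ (i.e. $\nu=\psi_1\circ\tilde\nu$), takes values in $\widehat H$ and satisfies $\nu(y_2,y_3)\,\nu(y_1y_2,y_3)^{-1}\,\nu(y_1,y_2y_3)\,\big(\nu(y_1,y_2)^{y_3}\big)^{-1}=1$, hence defines an element of $\underline H^2(K,\widehat H)$.
   Context: $k$ algebraically closed of characteristic $0$; $G$ finite, $\omega\in Z^3(G,k^\times)$ normalized; $H\trianglelefteq G$ abelian; $K=G/H$, $p(g)=Hg$, $u\colon K\to G$ a section with $u(p(1_G))=1_G$, $x\triangleleft g=p(u(x)g)$. $C=\mathrm{Fun}(K,k^\times)$ with left $G$-action $(g\triangleright f)(x)=f(x\triangleleft g)$; normalized cochains, multiplicative coboundary $\delta$. $\mu\in C^2(G,C)$ with $\delta^2\mu=\omega$, and ${}^y\mu/\mu$ trivial in $H^2(G,C)$ for all $y\in K$, where $({}^y\gamma)(g_1,\dots,g_n)(x)=\gamma(g_1,\dots,g_n)(yx)$. For each $y\in K$, $\eta_y\in C^1(G,C)$ with $\delta^1\eta_y={}^y\mu/\mu$, and $\tilde\nu(y_1,y_2)={}^{y_2}\eta_{y_1}\eta_{y_2}/\eta_{y_1y_2}\in Z^1(G,C)$. $\widehat H=\mathrm{Hom}(H,k^\times)$ is a right $K$-module via $\rho^y(h)=\rho(u(y)hu(y)^{-1})$. $\underline H^2(K,\widehat H)$ is the second cohomology with coboundary $(\underline\delta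 f)(y_1,\dots,y_{n+1})=f(y_2,\dots)\prod_i f(\dots,y_iy_{i+1},\dots)^{(-1)^i}(f(y_1,\dots,y_n)^{y_{n+1}})^{(-1)^{n+1}}$. *)

(* Defs.v *)
From HB Require Import structures.
From mathcomp Require Import all_boot all_order all_algebra all_fingroup.
Set Implicit Arguments. Unset Strict Implicit. Unset Printing Implicit Defensive.
Import GRing.Theory.

(* G is a subgroup of a finGroupType gT, H <| G abelian,
   K = G / H (quotient, elements of type coset_of H), p = coset H,
   u : coset_of H -> gT the section.  k^x is encoded as the nonzero elements
   of k.  An element of C = Fun(K, k^x) is a function coset_of H -> k
   (only its values on K matter).  A cochain in C^n(G,C) is a curried
   function of n elements of gT (only values on G matter). *)

Section Defs.
Variables (k : fieldType) (gT : finGroupType) (H : {group gT}).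
Variable u : coset_of H -> gT.

Definition ract (x : coset_of H) (g : gT) : coset_of H := coset H (u x * g)%g.

Definition lactC (g : gT) (f : coset_of H -> k) : coset_of H -> k :=
  fun x => f (ract x g).

Local Open Scope ring_scope.

Definition cobound1 (eta : gT -> coset_of H -> k) (g1 g2 : gT) :
    coset_of H -> k :=
  fun x => lactC g1 (eta g2) x * (eta (g1 * g2)%g x)^-1 * eta g1 x.

Definition cobound2 (mu : gT -> gT -> coset_of H -> k) (g1 g2 g3 : gT) :
    coset_of H -> k :=
  fun x => lactC g1 (mu g2 g3) x * (mu (g1 * g2)%g g3 x)^-1
           * mu g1 (g2 * g3)%g x * (mu g1 g2 x)^-1.

Definition shift2 (y : coset_of H) (mu : gT -> gT -> coset_of H -> k) :
    gT -> gT -> coset_of H -> k :=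
  fun g1 g2 x => mu g1 g2 (y * x)%g.

Definition shift1 (y : coset_of H) (eta : gT -> coset_of H -> k) :
    gT -> coset_of H -> k :=
  fun g x => eta g (y * x)%g.

Definition nutilde (eta : coset_of H -> gT -> coset_of H -> k)
    (y1 y2 : coset_of H) : gT -> coset_of H -> k :=
  fun g x => shift1 y2 (eta y1) g x * eta y2 g x * (eta (y1 * y2)%g g x)^-1.

Definition nu (eta : coset_of H -> gT -> coset_of H -> k)
    (y1 y2 : coset_of H) : gT -> k :=
  fun h => nutilde eta y1 y2 h 1%g.

Definition hat_ract (rho : gT -> k) (y : coset_of H) : gT -> k :=
  fun h => rho (u y * h * (u y)^-1)%g.

End Defs.

Definition is_hat (k : fieldType) (gT : finGroupType) (H : {set gT})
    (rho : gT -> k) : Prop :=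
  {in H, forall h, rho h != 0%R} /\
  {in H &, forall a b, rho (a * b)%g = (rho a * rho b)%R}.

(* Main.v *)
Require Import Defs.
From mathcomp Require Import all_boot all_order all_algebra all_fingroup.
From mathcomp Require Import ring.
Import GRing.Theory.
Local Open Scope ring_scope.

Lemma solve_eq (k : fieldType) (a b c d e : k) : c != 0 -> d != 0 -> e != 0 ->
  a * c^-1 * b = d / e -> c = a * b * e / d.
Proof.
move=> c0 d0 e0 E.
have -> : a * b = (a * c^-1 * b) * c by field.
rewrite E; field; by rewrite d0 e0.
Qed.

Theorem corollary4p3
  (k : closedFieldType) (hk0 : [pchar k] =i pred0)
  (gT : finGroupType) (G H : {group gT})
  (nHG : (H <| G)%g) (abH : abelian H)
  (u : coset_of H -> gT)
  (u_in : forall y, y \in (G / H)%g -> u y \in G)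
  (u_sec : forall y, y \in (G / H)%g -> coset H (u y) = y)
  (u1 : u (coset H 1%g) = 1%g)
  (* omega in Z^3(G, k^x), normalized *)
  (omega : gT -> gT -> gT -> k)
  (omega_nz : forall g1 g2 g3, g1 \in G -> g2 \in G -> g3 \in G ->
     omega g1 g2 g3 != 0)
  (omega_norm : forall g1 g2, g1 \in G -> g2 \in G ->
     [/\ omega 1%g g1 g2 = 1, omega g1 1%g g2 = 1 & omega g1 g2 1%g = 1])
  (omega_cocycle : forall g1 g2 g3 g4,
     g1 \in G -> g2 \in G -> g3 \in G -> g4 \in G ->
     omega g2 g3 g4 * (omega (g1 * g2)%g g3 g4)^-1 * omega g1 (g2 * g3)%g g4
       * (omega g1 g2 (g3 * g4)%g)^-1 * omega g1 g2 g3 = 1)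
  (* mu in C^2(G, C), normalized, with delta^2 mu = omega *)
  (mu : gT -> gT -> coset_of H -> k)
  (mu_nz : forall g1 g2 x, g1 \in G -> g2 \in G -> x \in (G / H)%g ->
     mu g1 g2 x != 0)
  (mu_norm : forall g x, g \in G -> x \in (G / H)%g ->
     mu 1%g g x = 1 /\ mu g 1%g x = 1)
  (mu_omega : forall g1 g2 g3 x,
     g1 \in G -> g2 \in G -> g3 \in G -> x \in (G / H)%g ->
     cobound2 u mu g1 g2 g3 x = omega g1 g2 g3)
  (* eta_y in C^1(G, C), normalized, with delta^1 eta_y = {}^y mu / mu *)
  (eta : coset_of H -> gT -> coset_of H -> k)
  (eta_nz : forall y g x, y \in (G / H)%g -> g \in G -> x \in (G / H)%g ->
     eta y g x != 0)
  (eta_norm : forall y x, y \in (G / H)%g -> x \in (G / H)%g ->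
     eta y 1%g x = 1)
  (eta_cob : forall y g1 g2 x,
     y \in (G / H)%g -> g1 \in G -> g2 \in G -> x \in (G / H)%g ->
     cobound1 u (eta y) g1 g2 x = shift2 y mu g1 g2 x / mu g1 g2 x) :
  (forall y1 y2, y1 \in (G / H)%g -> y2 \in (G / H)%g ->
     is_hat H (nu eta y1 y2)) /\
  (forall y1 y2 y3 h,
     y1 \in (G / H)%g -> y2 \in (G / H)%g -> y3 \in (G / H)%g -> h \in H ->
     nu eta y2 y3 h * (nu eta (y1 * y2)%g y3 h)^-1 * nu eta y1 (y2 * y3)%g h
       * (hat_ract u (nu eta y1 y2) y3 h)^-1 = 1).
Proof.
have sHG : (H \subset G)%g by case/andP: nHG.
have nH : forall g, g \in G -> g \in 'N(H)%g.
  by move=> g gG; apply: (subsetP (normal_norm nHG)).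
have HG : forall h, h \in H -> h \in G by move=> h hH; apply: (subsetP sHG).
have uN : forall y, y \in (G / H)%g -> u y \in 'N(H)%g by move=> y yK; apply: nH; apply: u_in.
have c1 : coset H 1%g = 1%g by apply: coset_id; apply: group1.
have u1' : u 1%g = 1%g by rewrite -c1.
have ractK : forall x g, x \in (G / H)%g -> g \in G -> Defs.ract u x g \in (G / H)%g.
  by move=> x g xK gG; rewrite /Defs.ract; apply: mem_quotient; rewrite groupM ?u_in.
have ract_sh : forall y x g, y \in (G / H)%g -> x \in (G / H)%g -> g \in G ->
    Defs.ract u (y * x)%g g = (y * Defs.ract u x g)%g.
  move=> y x g yK xK gG; rewrite /Defs.ract !morphM ?uN ?nH ?groupM //.
  rewrite /= !u_sec ?groupM // ?mulgA //.
have ractH : forall x a, x \in (G / H)%g -> a \in H -> Defs.ract u x a = x.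
  move=> x a xK aH; rewrite /Defs.ract morphM ?uN ?nH ?HG //.
  by rewrite /= u_sec // coset_id // mulg1.
have ract1 : forall y, y \in (G / H)%g -> Defs.ract u 1%g (u y) = y.
  by move=> y yK; rewrite /Defs.ract u1' mul1g u_sec.
have eta_mul : forall y g1 g2 x, y \in (G / H)%g -> g1 \in G -> g2 \in G ->
    x \in (G / H)%g ->
    eta y (g1 * g2)%g x = eta y g2 (Defs.ract u x g1) * eta y g1 x * mu g1 g2 x
       / mu g1 g2 (y * x)%g.
  move=> y g1 g2 x yK g1G g2G xK.
  have := eta_cob y g1 g2 x yK g1G g2G xK; rewrite /cobound1 /lactC /shift2 => E.
  apply: (@solve_eq _ _ _ _ _ _ _ _ _ E).
  - by apply: eta_nz; rewrite ?groupM.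
  - by apply: mu_nz; rewrite ?groupM.
  - by apply: mu_nz.
have nt_mul : forall y1 y2 g1 g2 x, y1 \in (G / H)%g -> y2 \in (G / H)%g ->
    g1 \in G -> g2 \in G -> x \in (G / H)%g ->
    nutilde eta y1 y2 (g1 * g2)%g x =
    nutilde eta y1 y2 g2 (Defs.ract u x g1) * nutilde eta y1 y2 g1 x.
  move=> y1 y2 g1 g2 x y1K y2K g1G g2G xK.
  have y2xK : (y2 * x)%g \in (G / H)%g by rewrite groupM.
  have y12K : (y1 * y2)%g \in (G / H)%g by rewrite groupM.
  rewrite /nutilde /shift1 !eta_mul // ract_sh // mulgA.
  have rK := ractK x g1 xK g1G.
  have n1 : mu g1 g2 (y2 * x)%g != 0 by apply: mu_nz.
  have n2 : mu g1 g2 (y1 * y2 * x)%g != 0 by apply: mu_nz; rewrite ?groupM.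
  have n3 : mu g1 g2 x != 0 by apply: mu_nz.
  have n4 : eta (y1 * y2)%g g2 (Defs.ract u x g1) != 0 by apply: eta_nz.
  have n5 : eta (y1 * y2)%g g1 x != 0 by apply: eta_nz.
  field.
  by rewrite n1 n2 n3 n4 n5.
have nt_nz : forall y1 y2 g x, y1 \in (G / H)%g -> y2 \in (G / H)%g ->
    g \in G -> x \in (G / H)%g -> nutilde eta y1 y2 g x != 0.
  move=> y1 y2 g x y1K y2K gG xK; rewrite /nutilde /shift1.
  by rewrite !mulf_neq0 ?invr_neq0 ?eta_nz ?groupM.
split.
  move=> y1 y2 y1K y2K; split.
    by move=> h hH; rewrite /nu; apply: nt_nz; rewrite ?HG ?group1.
  move=> a b aH bH; rewrite /nu nt_mul ?HG ?group1 // ractH ?group1 //.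
  by rewrite mulrC.
move=> y1 y2 y3 h y1K y2K y3K hH.
set v := u y3.
have vG : v \in G by apply: u_in.
set c := (v * h * v^-1)%g.
have cH : c \in H.
  have -> : c = (h ^ v^-1)%g by rewrite /c /conjg invgK mulgA.
  by rewrite memJ_norm // groupV nH.
have key : nutilde eta y1 y2 h y3 = nutilde eta y1 y2 c 1%g.
  have e1 : (c * v)%g = (v * h)%g by rewrite /c mulgKV.
  have := nt_mul y1 y2 c v 1%g y1K y2K (HG _ cH) vG (group1 _).
  have := nt_mul y1 y2 v h 1%g y1K y2K vG (HG _ hH) (group1 _).
  rewrite e1 (ractH 1%g c) ?group1 // ract1 // => ->.
  rewrite mulrC; apply: mulfI.
  by apply: nt_nz; rewrite ?group1.
rewrite /hat_ract -/v -/c /nu -key /nutilde /shift1 !mulg1 !mulgA.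
have y12K : (y1 * y2)%g \in (G / H)%g by rewrite groupM.
have y23K : (y2 * y3)%g \in (G / H)%g by rewrite groupM.
have y123K : (y1 * y2 * y3)%g \in (G / H)%g by rewrite !groupM.
have hG := HG _ hH.
have n1 := eta_nz y2 h y3 y2K hG y3K.
have n2 := eta_nz y3 h 1%g y3K hG (group1 _).
have n3 := eta_nz (y2 * y3)%g h 1%g y23K hG (group1 _).
have n4 := eta_nz (y1 * y2)%g h y3 y12K hG y3K.
have n5 := eta_nz (y1 * y2 * y3)%g h 1%g y123K hG (group1 _).
have n6 := eta_nz y1 h (y2 * y3)%g y1K hG y23K.
field.
by rewrite n1 n2 n3 n4 n5 n6.
Qed.
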